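(* Let $V$ be a standard $U_q(\widehat{\mathfrak{sl}}_2)$-module of diameter $1$ and let $W$ be any $U_q(\widehat{\mathfrak{sl}}_2)$-module. Then for every integer $n\ge1$, on $V\otimes W$: (i) $R^n$ acts as $1\otimes R^n+[n]_qR_n$, where $R_n=uq^{n-1}e_0^+\otimes R^{n-1}K_0+vq^{1-n}e_1^-K_1\otimes R^{n-1}K_1$; (ii) $L^n$ acts as $1\otimes L^n+[n]_qL_n$, where $L_n=u^*q^{1-n}e_1^+\otimes K_1L^{n-1}+v^*q^{n-1}e_0^-K_0\otimes K_0L^{n-1}$. (Here an element $X\otimes Y$ acts on $V\otimes W$ by $v\otimes w\mapsto Xv\otimes Yw$.)
   Context: Let $\mathbb F$ be an algebraically closed field and fix nonzero $q\in\mathbb F$ with $q^2\ne1$; write $[n]_q=(q^n-q^{-n})/(q-q^{-1})$. $U_q(\widehat{\mathfrak{sl}}_2)$ is the associative unital $\mathbb F$-algebra with generators $e_i^{\pm},K_i^{\pm1}$ ($i\in\{0,1\}$) and relations $K_iK_i^{-1}=K_i^{-1}K_i=1$, $K_0K_1=K_1K_0$, $K_ie_i^{\pm}K_i^{-1}=q^{\pm2}e_i^{\pm}$, $K_ie_j^{\pm}K_i^{-1}=q^{\mp2}e_j^{\pm}$ ($i\ne j$), $e_i^+e_i^--e_i^-e_i^+=(K_i-K_i^{-1})/(q-q^{-1})$, $e_0^{\pm}e_1^{\mp}=e_1^{\mp}e_0^{\pm}$, and $(e_i^\pm)^3e_j^\pm-[3]_q(e_i^\pm)^2e_j^\pm e_i^\pm+[3]_qe_i^\pm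 e_j^\pm(e_i^\pm)^2-e_j^\pm(e_i^\pm)^3=0$ ($i\ne j$). It is a Hopf algebra with comultiplication $\Delta(e_i^+)=e_i^+\otimes K_i+1\otimes e_i^+$, $\Delta(e_i^-)=e_i^-\otimes1+K_i^{-1}\otimes e_i^-$, $\Delta(K_i)=K_i\otimes K_i$, and the tensor product $V\otimes W$ of modules is a module via $z(v\otimes w)=\Delta(z)(v\otimes w)$. A standard module of diameter $1$ is a module $V(\alpha)$ ($\alpha\in\mathbb F$ nonzero) with basis $x,y$ and $K_1x=qx$, $K_1y=q^{-1}y$, $e_1^-x=y$, $e_1^-y=0$, $e_1^+x=0$, $e_1^+y=x$, $K_0x=q^{-1}x$, $K_0y=qy$, $e_0^-x=0$, $e_0^-y=q\alpha^{-1}x$, $e_0^+x=q^{-1}\alpha y$, $e_0^+y=0$. Fix nonzero $b,c,b^*,c^*\in\mathbb F$ and $u,v,u^*,v^*\in\mathbb F$ with $uv^*=-bb^*q^{-1}(q-q^{-1})^2$ and $vu^*=-cc^*q^{-1}(q-q^{-1})^2$; set $R=ue_0^++ve_1^-K_1$ and $L=u^*e_1^++v^*e_0^-K_0$ (and $R^0=L^0=1$). *)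

(* Defs.v *)
From HB Require Import structures.
From mathcomp Require Import all_boot all_order all_algebra.
Set Implicit Arguments. Unset Strict Implicit. Unset Printing Implicit Defensive.
Import Order.TTheory GRing.Theory Num.Theory.
Local Open Scope ring_scope.

Section Uq.
Variable F : fieldType.
Variable q : F.

Definition qint (n : nat) : F := (q ^+ n - q ^- n) / (q - q^-1).

Section Mod.
Variable W : lmodType F.

Definition is_lin (f : W -> W) := forall (a : F) (x y : W), f (a *: x + y) = a *: f x + f y.

Definition serre (a b : W -> W) :=
  forall w, a (a (a (b w))) - qint 3 *: a (a (b (a w)))
            + qint 3 *: a (b (a (a w))) - b (a (a (a w))) = 0.

Record uq_mod := UqMod {
  e0p : W -> W; e0m : W -> W; e1p : W -> W; e1m : W -> W;
  K0 : W -> W; K1 : W -> W; K0i : W -> W; K1i : W -> W;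
  e0p_lin : is_lin e0p; e0m_lin : is_lin e0m; e1p_lin : is_lin e1p; e1m_lin : is_lin e1m;
  K0_lin : is_lin K0; K1_lin : is_lin K1; K0i_lin : is_lin K0i; K1i_lin : is_lin K1i;
  K0K0i : forall w, K0 (K0i w) = w; K0iK0 : forall w, K0i (K0 w) = w;
  K1K1i : forall w, K1 (K1i w) = w; K1iK1 : forall w, K1i (K1 w) = w;
  K0K1 : forall w, K0 (K1 w) = K1 (K0 w);
  K0e0p : forall w, K0 (e0p (K0i w)) = q ^+ 2 *: e0p w;
  K0e0m : forall w, K0 (e0m (K0i w)) = q ^- 2 *: e0m w;
  K1e1p : forall w, K1 (e1p (K1i w)) = q ^+ 2 *: e1p w;
  K1e1m : forall w, K1 (e1m (K1i w)) = q ^- 2 *: e1m w;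
  K0e1p : forall w, K0 (e1p (K0i w)) = q ^- 2 *: e1p w;
  K0e1m : forall w, K0 (e1m (K0i w)) = q ^+ 2 *: e1m w;
  K1e0p : forall w, K1 (e0p (K1i w)) = q ^- 2 *: e0p w;
  K1e0m : forall w, K1 (e0m (K1i w)) = q ^+ 2 *: e0m w;
  comm0 : forall w, e0p (e0m w) - e0m (e0p w) = (q - q^-1)^-1 *: (K0 w - K0i w);
  comm1 : forall w, e1p (e1m w) - e1m (e1p w) = (q - q^-1)^-1 *: (K1 w - K1i w);
  e0pe1m : forall w, e0p (e1m w) = e1m (e0p w);
  e0me1p : forall w, e0m (e1p w) = e1p (e0m w);
  serre0p : serre e0p e1p; serre1p : serre e1p e0p;
  serre0m : serre e0m e1m; serre1m : serre e1m e0m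
}.

Variable M : uq_mod.

Definition RW (u v : F) (w : W) : W := u *: e0p M w + v *: e1m M (K1 M w).
Definition LW (us vs : F) (w : W) : W := us *: e1p M w + vs *: e0m M (K0 M w).

(* V(alpha) (x,y basis) tensor W is modelled as W * W:  (a, b) <-> x (x) a + y (x) b *)
Definition padd (p r : W * W) : W * W := (p.1 + r.1, p.2 + r.2).
Definition pscale (k : F) (p : W * W) : W * W := (k *: p.1, k *: p.2).

(* X (x) Y, where X : 'M_2 is an operator on V in the basis (x,y);
   X i j = coefficient of basis vector i in X(basis vector j). *)
Definition tens (X : 'M[F]_2) (Y : W -> W) (p : W * W) : W * W :=
  (X ord0 ord0 *: Y p.1 + X ord0 ord_max *: Y p.2,
   X ord_max ord0 *: Y p.1 + X ord_max ord_max *: Y p.2).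
End Mod.

Definition mx2 (a b c d : F) : 'M[F]_2 :=
  \matrix_(i < 2, j < 2)
    (if (i == 0 :> nat) then (if (j == 0 :> nat) then a else b)
     else (if (j == 0 :> nat) then c else d)).

(* Generators acting on the standard module V(alpha) of diameter 1 *)
Section Std.
Variable alpha : F.
Definition K1V := mx2 q 0 0 q^-1.
Definition K1iV := mx2 q^-1 0 0 q.
Definition K0V := mx2 q^-1 0 0 q.
Definition K0iV := mx2 q 0 0 q^-1.
Definition e1mV := mx2 0 0 1 0.
Definition e1pV := mx2 0 1 0 0.
Definition e0mV := mx2 0 (q / alpha) 0 0.
Definition e0pV := mx2 0 0 (alpha / q) 0.

Variables (W : lmodType F) (M : uq_mod W).

(* Action of Delta(z) on V(alpha) (x) W for the generators used *)
Definition De0p p := padd (tens e0pV (K0 M) p) (tens 1%:M (e0p M) p).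
Definition De1p p := padd (tens e1pV (K1 M) p) (tens 1%:M (e1p M) p).
Definition De0m p := padd (tens e0mV id p) (tens K0iV (e0m M) p).
Definition De1m p := padd (tens e1mV id p) (tens K1iV (e1m M) p).
Definition DK0 p := tens K0V (K0 M) p.
Definition DK1 p := tens K1V (K1 M) p.

Definition RVW (u v : F) (p : W * W) : W * W :=
  padd (pscale u (De0p p)) (pscale v (De1m (DK1 p))).
Definition LVW (us vs : F) (p : W * W) : W * W :=
  padd (pscale us (De1p p)) (pscale vs (De0m (DK0 p))).
End Std.
End Uq.

(* Main.v *)
Require Import Defs.
From HB Require Import structures.
From mathcomp Require Import all_boot all_order all_algebra.
From Stdlib Require Import Ring Field.
Import GRing.Theory.
Local Open Scope ring_scope.

Section FieldTac.
Variable F : fieldType.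
Definition addF (x y : F) : F := x + y.
Definition mulF (x y : F) : F := x * y.
Definition oppF (x : F) : F := - x.
Definition invF (x : F) : F := x^-1.
Definition expF (x : F) n : F := x ^+ n.
Definition zF : F := 0.
Definition oF : F := 1.
Lemma addE (x y : F) : x + y = addF x y. Proof. by []. Qed.
Lemma mulE (x y : F) : x * y = mulF x y. Proof. by []. Qed.
Lemma oppE (x : F) : - x = oppF x. Proof. by []. Qed.
Lemma invE (x : F) : x^-1 = invF x. Proof. by []. Qed.
Lemma expE (x : F) n : x ^+ n = expF x n. Proof. by []. Qed.
Lemma zE : 0 = zF :> F. Proof. by []. Qed.
Lemma oE : 1 = oF :> F. Proof. by []. Qed.
Lemma Fft : @field_theory (GRing.Field.sort F) zF oF addF mulF (fun x y => addF x (oppF y)) oppF (fun x y => mulF x (invF y)) invF eq.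
Proof.
constructor.
- constructor => *; [exact: add0r|exact: addrC|exact: addrA|exact: mul1r|exact: mulrC|exact: mulrA|exact: mulrDl|done|exact: subrr].
- by apply/eqP; exact: oner_neq0.
- done.
- by move=> p /eqP; exact: mulVf.
Qed.
Add Field Ffield : Fft.

Lemma neqF {x : F} : x != 0 -> x <> zF.
Proof. by move/eqP. Qed.

Section Scal.
Variables (q : F) (hq : q != 0) (hq2 : q * q - 1 != 0).
Let hqF := neqF hq.
Let hq2F : addF (mulF q q) (oppF oF) <> zF := neqF hq2.
Lemma hdq : q - q^-1 != 0.
Proof.
apply: contra hq2 => /eqP h. apply/eqP.
have -> : q * q - 1 = q * (q - q^-1) by rewrite mulrBr mulfV.
by rewrite h mulr0.
Qed.
Let hdF := neqF hdq.

Ltac norm := rewrite ?addE ?mulE ?oppE ?invE ?expE ?zE ?oE;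
  match goal with |- @eq _ ?a ?b => change (@eq (GRing.Field.sort F) a b) end.

Lemma qint1 : qint q 1 = 1.
Proof. rewrite /qint expr1 divff //; exact: hdq. Qed.

Lemma qintA m :
  qint q m.+1 * q ^+ m + (q^+2)^+m.+1 = qint q m.+2 * q ^+ m.+1.
Proof.
rewrite /qint exprAC !expr2 !exprS.
have hX := neqF (expf_neq0 m hq).
norm. field. split=> //; split=>//.
Qed.

Lemma qintB m :
  qint q m.+1 * q ^- m + (q^-2)^+m.+1 = qint q m.+2 * q ^- m.+1.
Proof.
rewrite /qint exprVn exprAC !expr2 !exprS.
have hX := neqF (expf_neq0 m hq).
norm. field. split=> //; split=>//.
Qed.

Lemma qintC m :
  qint q m.+1 * q ^- m * q^-2 + 1 = qint q m.+2 * q ^- m.+1.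
Proof.
rewrite /qint !expr2 !exprS.
have hX := neqF (expf_neq0 m hq).
norm. field. split=> //; split=>//.
Qed.

Lemma qintD m :
  qint q m.+1 * q ^+ m * q^+2 + 1 = qint q m.+2 * q ^+ m.+1.
Proof.
rewrite /qint !expr2 !exprS.
have hX := neqF (expf_neq0 m hq).
norm. field. split=> //; split=>//.
Qed.

Lemma aux1 (A B X Y Z c d : F) : A * X + Y = B * Z ->
  A * (c * X) * d + c * d * Y = B * (c * Z) * d.
Proof.
move=> H; have -> : B * (c * Z) * d = (B * Z) * (c * d) by norm; ring.
rewrite -H; norm; ring.
Qed.

Lemma aux2 (A B X Z c d e : F) : A * X * e + 1 = B * Z ->
  A * (c * X) * d * e + c * d = B * (c * Z) * d.
Proof.
move=> H; have -> : B * (c * Z) * d = (B * Z) * (c * d) by norm; ring.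
rewrite -H; norm; ring.
Qed.

Section Lin.
Variables (W : lmodType F) (f : W -> W) (hf : is_lin f).
Lemma lin0 : f 0 = 0.
Proof.
have h := hf 1 0 0; rewrite !scale1r addr0 in h.
apply: (@addrI _ (f 0)); by rewrite addr0 -h.
Qed.
Lemma linZ k x : f (k *: x) = k *: f x.
Proof. by have := hf k x 0; rewrite addr0 lin0 addr0. Qed.
Lemma linD x y : f (x + y) = f x + f y.
Proof. by have := hf 1 x y; rewrite !scale1r. Qed.
End Lin.
Arguments lin0 {W f} hf.
Arguments linZ {W f} hf k x.
Arguments linD {W f} hf x y.

Lemma iter_lin (W : lmodType F) (f : W -> W) k : is_lin f -> is_lin (iter k f).
Proof.
move=> hf; elim: k => [|k IH] a x y //=.
by rewrite IH hf.
Qed.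

Section Mod.
Variables (W : lmodType F) (M : uq_mod q W).
Variables (alpha : F) (halpha : alpha != 0) (u v us vs : F).

Local Notation R := (RW M u v).
Local Notation L := (LW M us vs).

Let e0pZ := linZ (e0p_lin M). Let e0pD := linD (e0p_lin M).
Let e1pZ := linZ (e1p_lin M). Let e1pD := linD (e1p_lin M).
Let e0mZ := linZ (e0m_lin M). Let e0mD := linD (e0m_lin M).
Let e1mZ := linZ (e1m_lin M). Let e1mD := linD (e1m_lin M).
Let K0Z := linZ (K0_lin M). Let K0D := linD (K0_lin M).
Let K1Z := linZ (K1_lin M). Let K1D := linD (K1_lin M).

Lemma R_lin : is_lin R.
Proof.
move=> a x y; rewrite /RW K1D K1Z e0pD e0pZ e1mD e1mZ !scalerDr !scalerA.
by rewrite [u * a]mulrC [v * a]mulrC addrACA.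
Qed.
Lemma L_lin : is_lin L.
Proof.
move=> a x y; rewrite /LW K0D K0Z e1pD e1pZ e0mD e0mZ !scalerDr !scalerA.
by rewrite [us * a]mulrC [vs * a]mulrC addrACA.
Qed.
Let RZ := linZ R_lin. Let RD := linD R_lin.
Let LZ := linZ L_lin. Let LD := linD L_lin.

Lemma K0e0p' w : K0 M (e0p M w) = q^+2 *: e0p M (K0 M w).
Proof. by rewrite -{1}(K0iK0 M w) K0e0p. Qed.
Lemma K0e1m' w : K0 M (e1m M w) = q^+2 *: e1m M (K0 M w).
Proof. by rewrite -{1}(K0iK0 M w) K0e1m. Qed.
Lemma K1e0p' w : K1 M (e0p M w) = q^-2 *: e0p M (K1 M w).
Proof. by rewrite -{1}(K1iK1 M w) K1e0p. Qed.
Lemma K1e1m' w : K1 M (e1m M w) = q^-2 *: e1m M (K1 M w).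
Proof. by rewrite -{1}(K1iK1 M w) K1e1m. Qed.
Lemma K1e1p' w : K1 M (e1p M w) = q^+2 *: e1p M (K1 M w).
Proof. by rewrite -{1}(K1iK1 M w) K1e1p. Qed.
Lemma K1e0m' w : K1 M (e0m M w) = q^+2 *: e0m M (K1 M w).
Proof. by rewrite -{1}(K1iK1 M w) K1e0m. Qed.
Lemma K0e1p' w : K0 M (e1p M w) = q^-2 *: e1p M (K0 M w).
Proof. by rewrite -{1}(K0iK0 M w) K0e1p. Qed.
Lemma K0e0m' w : K0 M (e0m M w) = q^-2 *: e0m M (K0 M w).
Proof. by rewrite -{1}(K0iK0 M w) K0e0m. Qed.

Lemma K0R w : K0 M (R w) = q^+2 *: R (K0 M w).
Proof.
rewrite /RW K0D !K0Z K0e0p' K0e1m' K0K1 !scalerDr !scalerA.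
by rewrite [u * _]mulrC [v * _]mulrC.
Qed.
Lemma K1R w : K1 M (R w) = q^-2 *: R (K1 M w).
Proof.
rewrite /RW K1D !K1Z K1e0p' K1e1m' !scalerDr !scalerA.
by rewrite [u * _]mulrC [v * _]mulrC.
Qed.
Lemma K1L w : K1 M (L w) = q^+2 *: L (K1 M w).
Proof.
rewrite /LW K1D !K1Z K1e1p' K1e0m' -K0K1 !scalerDr !scalerA.
by rewrite [us * _]mulrC [vs * _]mulrC.
Qed.
Lemma K0L w : K0 M (L w) = q^-2 *: L (K0 M w).
Proof.
rewrite /LW K0D !K0Z K0e1p' K0e0m' !scalerDr !scalerA.
by rewrite [us * _]mulrC [vs * _]mulrC.
Qed.

Lemma K0Rn k w : K0 M (iter k R w) = (q^+2)^+k *: iter k R (K0 M w).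
Proof.
elim: k => [|k IH] /=; first by rewrite expr0 scale1r.
by rewrite K0R IH RZ scalerA -exprS.
Qed.
Lemma K1Rn k w : K1 M (iter k R w) = (q^-2)^+k *: iter k R (K1 M w).
Proof.
elim: k => [|k IH] /=; first by rewrite expr0 scale1r.
by rewrite K1R IH RZ scalerA -exprS.
Qed.
Lemma LK1 w : L (K1 M w) = q^-2 *: K1 M (L w).
Proof. by rewrite K1L scalerA mulVf ?scale1r // expf_neq0. Qed.
Lemma LK0 w : L (K0 M w) = q^+2 *: K0 M (L w).
Proof. by rewrite K0L scalerA mulfV ?scale1r // expf_neq0. Qed.

Lemma RVW_pair a b : RVW alpha M u v (a, b) =
  (R a, R b + ((u * (alpha / q)) *: K0 M a + (v * q) *: K1 M a)).
Proof.
rewrite /RVW /De0p /De1m /DK1 /tens /padd /pscale /=.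
rewrite !mxE /= !scale0r !addr0 !add0r !scale1r !e1mZ !scalerA divfK // divff // scale1r.
rewrite /RW; congr pair; rewrite !scalerDr !scalerA.
by rewrite addrACA addrC.
Qed.

Lemma LVW_pair a b : LVW alpha M us vs (a, b) =
  (L a + (us *: K1 M b + (vs * (q / alpha * q)) *: K0 M b), L b).
Proof.
rewrite /LVW /De1p /De0m /DK0 /tens /padd /pscale /=.
rewrite !mxE /= !scale0r !addr0 !add0r !scale1r !e0mZ !scalerA divff // divfK // !scale1r.
rewrite /LW; congr pair; rewrite !scalerDr !scalerA.
by rewrite addrACA addrC.
Qed.

Lemma R_comb x c y d z : R (x + (c *: y + d *: z)) = R x + (c *: R y + d *: R z).
Proof. by rewrite !RD !RZ. Qed.
Lemma L_comb x c y d z : L (x + (c *: y + d *: z)) = L x + (c *: L y + d *: L z).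
Proof. by rewrite !LD !LZ. Qed.

Lemma RVW_iter m a b : iter m.+1 (RVW alpha M u v) (a, b) =
  (iter m.+1 R a, iter m.+1 R b +
     ((qint q m.+1 * (u * q^+m) * (alpha / q)) *: iter m R (K0 M a) +
      (qint q m.+1 * (v * q^-m) * q) *: iter m R (K1 M a))).
Proof.
elim: m => [|m IH].
  by rewrite /= RVW_pair qint1 expr0 invr1 !mulr1 !mul1r.
rewrite iterS IH RVW_pair K0Rn K1Rn (R_comb (iter m.+1 R b)) !iterS; congr pair.
rewrite -addrA; congr (_ + _); rewrite !scalerA addrACA -!scalerDl.
by congr (_ *: _ + _ *: _); apply: aux1; [apply: qintA | apply: qintB].
Qed.

Lemma LVW_iter m a b : iter m.+1 (LVW alpha M us vs) (a, b) =
  (iter m.+1 L a +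
     ((qint q m.+1 * (us * q^-m)) *: K1 M (iter m L b) +
      (qint q m.+1 * (vs * q^+m) * (q / alpha * q)) *: K0 M (iter m L b)),
   iter m.+1 L b).
Proof.
elim: m => [|m IH].
  by rewrite /= LVW_pair qint1 expr0 invr1 !mulr1 !mul1r.
rewrite iterS IH LVW_pair (L_comb (iter m.+1 L a)) LK1 LK0 !iterS; congr pair.
rewrite -addrA; congr (_ + _); rewrite !scalerA addrACA -!scalerDl.
congr (_ *: _ + _ *: _).
  by have := @aux2 _ _ _ _ us 1 _ (qintC m); rewrite !mulr1.
exact: aux2 (qintD m).
Qed.
End Mod.
End Scal.
End FieldTac.

Lemma prod1 (F : fieldType) (q : F) : e1mV F *m K1V q = mx2 0 0 q 0.
Proof.
apply/matrixP => i j; rewrite !mxE !big_ord_recl big_ord0 !mxE /=.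
case: i => [[|[|i]] Hi] //=; case: j => [[|[|j]] Hj] //=; rewrite ?mxE /=;
by rewrite !(mul0r, mulr0, add0r, addr0, mul1r).
Qed.

Lemma prod2 (F : fieldType) (q alpha : F) : e0mV q alpha *m K0V q = mx2 0 (q / alpha * q) 0 0.
Proof.
apply/matrixP => i j; rewrite !mxE !big_ord_recl big_ord0 !mxE /=.
case: i => [[|[|i]] Hi] //=; case: j => [[|[|j]] Hj] //=; rewrite ?mxE /=;
by rewrite !(mul0r, mulr0, add0r, addr0, mul1r).
Qed.

Theorem lemma7p10 (F : closedFieldType) (q : F) (hq0 : q != 0) (hq2 : q ^+ 2 != 1)
  (b c bs cs u v us vs : F)
  (hb : b != 0) (hc : c != 0) (hbs : bs != 0) (hcs : cs != 0)
  (huvs : u * vs = - (b * bs * q^-1 * (q - q^-1) ^+ 2))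
  (hvus : v * us = - (c * cs * q^-1 * (q - q^-1) ^+ 2))
  (alpha : F) (halpha : alpha != 0)
  (W : lmodType F) (M : uq_mod q W) (n : nat) (hn : (1 <= n)%N) :
  (forall p : W * W,
     iter n (RVW alpha M u v) p =
     padd (tens 1%:M (iter n (RW M u v)) p)
       (pscale (qint q n)
          (padd (pscale (u * q ^+ (n - 1)) 
                   (tens (e0pV q alpha) (fun w => iter (n - 1) (RW M u v) (K0 M w)) p))
                (pscale (v * q ^- (n - 1))
                   (tens (e1mV F *m K1V q) (fun w => iter (n - 1) (RW M u v) (K1 M w)) p)))))
  /\
  (forall p : W * W,
     iter n (LVW alpha M us vs) p =
     padd (tens 1%:M (iter n (LW M us vs)) p)
       (pscale (qint q n)
          (padd (pscale (us * q ^- (n - 1))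
                   (tens (e1pV F) (fun w => K1 M (iter (n - 1) (LW M us vs) w)) p))
                (pscale (vs * q ^+ (n - 1))
                   (tens (e0mV q alpha *m K0V q) (fun w => K0 M (iter (n - 1) (LW M us vs) w)) p))))).
Proof.
have hq2' : q * q - 1 != 0 by rewrite subr_eq0 -expr2.
case: n hn => // m _; rewrite !subSS !subn0.
split=> -[a b'].
- rewrite (@RVW_iter _ _ hq0 hq2') prod1 /padd /tens /pscale /= !mxE /=.
  rewrite ?scale0r ?scaler0 ?addr0 ?add0r ?scale1r ?scaler0 ?addr0 ?add0r; congr pair.
  by rewrite scaler0 addr0.
  by rewrite !scalerDr !scalerA !mulrA.
- rewrite (@LVW_iter _ _ hq0 hq2') prod2 /padd /tens /pscale /= !mxE /=.
  rewrite ?scale0r ?scaler0 ?addr0 ?add0r ?scale1r ?scaler0 ?addr0 ?add0r; congr pair.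
  by rewrite !scalerDr !scalerA !mulrA.
  by rewrite scaler0 addr0.
Qed.
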